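(* Let $P$ be a finite ranked poset with rank function $r$, let $P^*\subseteq P$ be a set of marked elements with $\min(P)\cup\max(P)\subseteq P^*$, and let $\lambda^r\colon P^*\to\mathbb{Z}$ be given by $\lambda^r(a)=r(a)$. Then for every partition $P\setminus P^*=C\sqcup O$, the marked chain-order polytope $\mathcal{O}_{C,O}(P,\lambda^r)$, regarded as a subset of $\mathbb{R}^{P\setminus P^*}$, has a unique interior lattice point.
   Context: A rank function on a poset $P$ is a map $r\colon P\to\mathbb{Z}$ with $r(p)=r(q)-1$ for every covering relation $p\prec q$; $P$ is ranked if it has one. For an order-preserving $\lambda\colon P^*\to\mathbb{R}$ and a partition $P\setminus P^*=C\sqcup O$, $\mathcal{O}_{C,O}(P,\lambda)\subseteq\mathbb{R}^P$ is the set of all $\mathbf{x}$ with: (1) $x_a=\lambda(a)$ for $a\in P^*$; (2) $x_p\ge0$ for $p\in C$; (3) $x_{p_1}+\cdots+x_{p_r}\le x_b-x_a$ for every saturated chain $a\prec p_1\prec\cdots\prec p_r\prec b$ in $P$ with $a,b\in P^*\sqcup O$, all $p_i\in C$, $r\ge0$. It is regarded as a subset of $\mathbb{R}^{P\setminus P^*}$ via projection onto the unmarked coordinates; ''interior'' means interior in $\mathbb{R}^{P\setminus P^*}$ and lattice points are points of $\mathbb{Z}^{P\setminus P^*}$. *)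

(* Defs.v *)
From HB Require Import structures.
From mathcomp Require Import all_boot all_order all_algebra.
From mathcomp Require Import all_classical all_reals all_analysis.
Set Implicit Arguments. Unset Strict Implicit. Unset Printing Implicit Defensive.
Import Order.TTheory GRing.Theory Num.Theory.
Import numFieldNormedType.Exports.
Local Open Scope ring_scope.
Local Open Scope classical_set_scope.

Section MarkedChainOrder.
Variables (d : Order.disp_t) (P : finPOrderType d).

Definition covers (p q : P) : bool :=
  (p < q)%O && [forall z : P, ~~ ((p < z)%O && (z < q)%O)].

Definition minimalb (p : P) : bool := [forall z : P, ~~ (z < p)%O].
Definition maximalb (p : P) : bool := [forall z : P, ~~ (p < z)%O].

Definition is_rank_function (r : P -> int) : Prop :=
  forall p q : P, covers p q -> r p = r q - 1.

Variable R : realType.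

Definition marked_chain_order_polytope (Pstar C O : {set P})
    (lambda : P -> R) : set (P -> R) :=
  [set x | [/\ (forall a, a \in Pstar -> x a = lambda a),
              (forall p, p \in C -> 0 <= x p) &
              (forall (a b : P) (s : seq P),
                  a \in Pstar :|: O -> b \in Pstar :|: O ->
                  all (fun p => p \in C) s ->
                  path covers a (rcons s b) ->
                  \sum_(p <- s) x p <= x b - x a)]].

Definition unmarked (Pstar : {set P}) : finType := {p : P | p \notin Pstar}.

(* projection of a subset of R^P onto the unmarked coordinates R^{P \ P^*},
   carrying the (Euclidean = product) topology *)
Definition proj_unmarked (Pstar : {set P}) (S : set (P -> R))
    : set {ptws unmarked Pstar -> R} :=
  [set y | exists2 x, S x & forall u : unmarked Pstar, x (val u) = y u].

End MarkedChainOrder.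

Arguments proj_unmarked {d P R} Pstar S.
Arguments marked_chain_order_polytope {d P R} Pstar C O lambda.
Arguments unmarked {d P} Pstar.

(* Main.v *)
Require Import Defs.
From HB Require Import structures.
From mathcomp Require Import all_boot all_order all_algebra.
From mathcomp Require Import all_classical all_reals all_analysis.
From mathcomp Require Import zify ring lra.
Import Order.TTheory GRing.Theory Num.Theory.
Import numFieldNormedType.Exports.
Local Open Scope ring_scope.

Section Poset.
Variables (d : Order.disp_t) (P : finPOrderType d).
Local Notation cov := (@covers d P).

Lemma covers_lt (p q : P) : covers p q -> (p < q)%O.
Proof. by case/andP. Qed.

Lemma cover_exists_aux n : forall z p : P, (z < p)%O ->
  (#|[set w | (z < w)%O && (w < p)%O]| < n)%N ->
  (exists w, covers z w) /\ (exists v, covers v p).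
Proof.
elim: n => [//|n IH] z p zp hn.
case: (boolP [forall w : P, ~~ ((z < w)%O && (w < p)%O)]) => H.
  by split; [exists p|exists z]; apply/andP.
move/forallPn: H => [m]; rewrite negbK => /andP[zm mp].
have [h1 _] : (exists w, covers z w) /\ (exists v, covers v m).
  apply: (IH z m zm); rewrite -ltnS; apply: leq_trans hn.
  rewrite ltnS; apply: proper_card; apply/properP; split.
    by apply/fintype.subsetP => w; rewrite !inE => /andP[-> /lt_trans]; apply.
  by exists m; rewrite !inE ?zm ?mp ?ltxx.
have [_ h2] : (exists w, covers m w) /\ (exists v, covers v p).
  apply: (IH m p mp); rewrite -ltnS; apply: leq_trans hn.
  rewrite ltnS; apply: proper_card; apply/properP; split.
    by apply/fintype.subsetP => w; rewrite !inE => /andP[/(lt_trans zm) -> ->].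
  by exists m; rewrite !inE ?zm ?mp ?ltxx.
by split.
Qed.

Lemma cover_exists (z p : P) : (z < p)%O ->
  (exists w, covers z w) /\ (exists v, covers v p).
Proof. by move=> zp; apply: (@cover_exists_aux #|P|.+1 z p zp); rewrite ltnS max_card. Qed.

Lemma path_lt (a : P) s : path cov a s -> path (<%O) a s.
Proof. by apply: sub_path => x y /covers_lt. Qed.

Lemma path_all_lt (a : P) s : path cov a s -> all (fun q => (a < q)%O) s.
Proof. by move/path_lt; apply: order_path_min; apply: lt_trans. Qed.

Lemma path_uniq (a : P) s : path cov a s -> uniq (a :: s).
Proof. move/path_lt => h; apply: (sorted_uniq lt_trans ltxx); exact: h. Qed.

Lemma rank_path (r : P -> int) : is_rank_function r ->
  forall (a : P) s, path cov a s -> r (last a s) = r a + (size s)%:Z.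
Proof.
move=> hr a s; elim: s a => [|h t IH] a /=; first by rewrite addr0.
case/andP=> ah /IH ->; rewrite (hr _ _ ah) -addn1 PoszD; lia.
Qed.
End Poset.
Arguments covers_lt {d P p q}.
Arguments cover_exists {d P z p}.
Arguments path_lt {d P a s}.
Arguments path_all_lt {d P a s}.
Arguments path_uniq {d P a s}.
Arguments rank_path {d P r} _ {a s}.

Section Main.
Variables (R : realType) (d : Order.disp_t) (P : finPOrderType d)
  (r : P -> int) (Pstar C O : {set P}).
Hypotheses (hr : is_rank_function r)
  (hmm : forall p : P, minimalb p || maximalb p -> p \in Pstar)
  (hCO : C :&: O = finset.set0) (hCOP : C :|: O = ~: Pstar).
Local Notation cov := (@covers d P).
Local Notation U := (unmarked Pstar).

Definition lam (a : P) : R := (r a)%:~R.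
Local Notation S := (marked_chain_order_polytope Pstar C O lam).

Lemma C_notP p : p \in C -> p \notin Pstar.
Proof. move=> pC; have : p \in ~: Pstar by rewrite -hCOP finset.in_setU pC.
by rewrite finset.in_setC. Qed.
Lemma O_notP p : p \in O -> p \notin Pstar.
Proof. move=> pC; have : p \in ~: Pstar by rewrite -hCOP finset.in_setU pC orbT.
by rewrite finset.in_setC. Qed.
Lemma C_notO p : p \in C -> p \notin O.
Proof. move=> pC; apply/negP => pO; have : p \in C :&: O by rewrite finset.in_setI pC.
by rewrite hCO finset.in_set0. Qed.
Lemma trich p : [\/ p \in Pstar, p \in C | p \in O].
Proof.
case: (boolP (p \in Pstar)) => hp; first by constructor 1.
have : p \in ~: Pstar by rewrite finset.in_setC.
by rewrite -hCOP finset.in_setU => /orP[] h; [constructor 2|constructor 3].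
Qed.

Definition ext (y : U -> R) (p : P) : R :=
  if (insub p : option U) is Some u then y u else lam p.

Lemma ext_val y (u : U) : ext y (val u) = y u.
Proof. by rewrite /ext valK. Qed.
Lemma ext_marked y p : p \in Pstar -> ext y p = lam p.
Proof. by move=> hp; rewrite /ext insubF // hp. Qed.
Lemma ext_unmarked y p (hp : p \notin Pstar) : ext y p = y (Sub p hp).
Proof. by rewrite /ext insubT. Qed.

Lemma proj_ext (y : U -> R) : proj_unmarked Pstar S y -> S (ext y).
Proof.
case=> x Sx hx; suff -> : ext y = x by [].
apply: funext => p; case: (boolP (p \in Pstar)) => hp.
  by rewrite ext_marked //; case: Sx => h _ _; rewrite h.
by rewrite (ext_unmarked y p hp) -hx.
Qed.

Lemma ext_proj (y : U -> R) : S (ext y) -> proj_unmarked Pstar S y.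
Proof. by move=> Sy; exists (ext y) => // u; rewrite ext_val. Qed.

Definition pert (y : U -> R) (u : U) (t : R) : U -> R := dfwith y u (y u + t).

Lemma pert_val y u t v : pert y u t v = y v + (if v == u then t else 0).
Proof.
rewrite /pert; case: (eqVneq u v) => [<-|nuv]; first by rewrite dfwithin.
by rewrite dfwithout // addr0.
Qed.

Lemma ext_pert y u t p : ext (pert y u t) p = ext y p + (if p == val u then t else 0).
Proof.
case: (boolP (p \in Pstar)) => hp.
  rewrite !ext_marked //; have /negbTE -> : p != val u.
    by apply/eqP => e; move: (valP u); rewrite -e hp.
  by rewrite addr0.
by rewrite (ext_unmarked (pert y u t) p hp) (ext_unmarked y p hp) pert_val -val_eqE SubK.
Qed.

Lemma sum_ext_pert y u t s : val u \notin s ->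
  \sum_(q <- s) ext (pert y u t) q = \sum_(q <- s) ext y q.
Proof.
elim: s => [|h s IH]; first by rewrite !big_nil.
rewrite inE negb_or => /andP[hn /IH]; rewrite !big_cons => ->.
by rewrite ext_pert eq_sym (negbTE hn) addr0.
Qed.

Lemma pert_ex (A : set {ptws U -> R}) (y : {ptws U -> R}) u : nbhs y A ->
  exists2 e : R, 0 < e & A (pert y u e) /\ A (pert y u (- e)).
Proof.
move=> hA.
have hc := @dfwith_continuous U (fun _ => R) y u (y u).
have e : dfwith y u (y u) = y.
  apply: funext => v; case: (eqVneq u v) => [<-|?]; first by rewrite dfwithin.
  by rewrite dfwithout.
have h2 : nbhs (y u) ((dfwith y u) @^-1` A)%classic.
  apply: hc; rewrite e; exact: hA.
move: h2; move/nbhs_normP => [e0 /= e0p he].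
exists (e0 / 2); first by lra.
split; apply: he => /=.
  rewrite (_ : y u - (y u + e0 / 2) = - (e0 / 2)); last by ring.
  rewrite normrN gtr0_norm; lra.
rewrite (_ : y u - (y u + - (e0 / 2)) = e0 / 2); last by ring.
rewrite gtr0_norm; lra.
Qed.


Lemma int_lt1 (a b : R) : a \is a Num.int -> b \is a Num.int -> a < b -> a + 1 <= b.
Proof.
move=> /intrP[m ->] /intrP[n ->]; rewrite ltr_int -lezD1 => h.
by rewrite -intrD1 ler_int.
Qed.

Lemma sum_nil (f : P -> R) : \sum_(q <- [::]) f q = 0.
Proof. by rewrite big_nil. Qed.

Section Interior.
Variables (y : {ptws U -> R}).
Hypotheses (hy : nbhs y (proj_unmarked Pstar S)) (hint : forall u, y u \is a Num.int).
Local Notation x := (ext y).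

Lemma xS : S x.
Proof. by apply: proj_ext; apply: nbhs_singleton hy. Qed.

Lemma x_int p : x p \is a Num.int.
Proof.
case: (boolP (p \in Pstar)) => hp; first by rewrite ext_marked // intr_int.
by rewrite (ext_unmarked y p hp).
Qed.

Lemma chainS {z : P -> R} : S z -> forall a b s,
  a \in Pstar :|: O -> b \in Pstar :|: O -> all (fun p => p \in C) s ->
  path cov a (rcons s b) -> \sum_(p <- s) z p <= z b - z a.
Proof. by case. Qed.
Arguments chainS {z} _ {a b s}.

Lemma pertS u : (exists2 e : R, 0 < e & S (ext (pert y u e)) /\ S (ext (pert y u (- e)))).
Proof.
have [e e0 [h1 h2]] := @pert_ex _ y u hy.
by exists e => //; split; apply: proj_ext.
Qed.

Lemma strict a b s : a \in Pstar :|: O -> b \in Pstar :|: O ->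
  all (fun p => p \in C) s -> path cov a (rcons s b) ->
  \sum_(p <- s) x p < x b - x a.
Proof.
move=> ha hb hs hp.
have hu := path_uniq hp.
case: s hs hp hu => [|h t].
  move=> _ /= /andP[hab _] _; rewrite sum_nil.
  have nab : (a == b) = false by rewrite (lt_eqF (covers_lt hab)).
  have hp1 : path cov a (rcons [::] b) by rewrite /= hab.
  case: (boolP (b \in O)) => bO.
    have [e e0 [_ h2]] := pertS (Sub b (O_notP _ bO)).
    have := chainS h2 ha hb (isT : all _ [::]) hp1.
    rewrite sum_nil !ext_pert SubK eqxx nab; lra.
  case: (boolP (a \in O)) => aO.
    have [e e0 [h1 _]] := pertS (Sub a (O_notP _ aO)).
    have := chainS h1 ha hb (isT : all _ [::]) hp1.
    rewrite sum_nil !ext_pert SubK eqxx eq_sym nab; lra.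
  move: ha hb; rewrite !finset.in_setU (negbTE aO) (negbTE bO) !orbF => ha hb.
  rewrite !ext_marked // /lam (hr _ _ hab) intrB mulr1z; lra.
move=> /= /andP[hC ht] /andP[hah hpt] /and3P[hna hnh _].
move: hna; rewrite in_cons negb_or => /andP[nah _].
move: hnh; rewrite mem_rcons in_cons negb_or => /andP[nhb nht].
have [e e0 [h1 _]] := pertS (Sub h (C_notP _ hC)).
have hp2 : path cov a (rcons (h :: t) b) by rewrite /= hah hpt.
have := chainS h1 ha hb (_ : all _ (h :: t)) hp2.
rewrite /= hC ht => /(_ isT).
rewrite big_cons sum_ext_pert ?SubK // !ext_pert SubK eqxx (negbTE nah) eq_sym (negbTE nhb).
rewrite big_cons; lra.
Qed.

Lemma C_ge1 p : p \in C -> 1 <= x p.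
Proof.
move=> pC; have [e e0 [_ h2]] := pertS (Sub p (C_notP _ pC)).
case: h2 => _ h _; have := h p pC; rewrite ext_pert SubK eqxx => hh.
have h0 : 0 < x p by lra.
by have := @int_lt1 0 (x p) (rpred0 _) (x_int p) h0; rewrite add0r.
Qed.

Lemma sum_int s : \sum_(p <- s) x p \is a Num.int.
Proof. by elim: s => [|h s IH]; rewrite ?big_nil ?big_cons ?rpredD ?x_int. Qed.

Lemma sum_ge {s} : all (fun p => p \in C) s -> (size s)%:R <= \sum_(p <- s) x p.
Proof.
elim: s => [|h s IH]; rewrite ?big_nil // big_cons /= => /andP[hC /IH hs].
have := C_ge1 _ hC; rewrite -addn1 natrD; lra.
Qed.

Lemma chain_ge {a b s} : a \in Pstar :|: O -> b \in Pstar :|: O ->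
  all (fun p => p \in C) s -> path cov a (rcons s b) ->
  \sum_(p <- s) x p + 1 <= x b - x a.
Proof.
move=> ha hb hs hp; apply: int_lt1; first exact: sum_int.
  by apply: rpredB; exact: x_int.
exact: strict.
Qed.

Lemma PO_or_C v : v \in Pstar :|: O \/ v \in C.
Proof.
by case: (trich v) => h; [left; rewrite finset.in_setU h | right | left; rewrite finset.in_setU h orbT].
Qed.

Lemma lam_path {a t} : path cov a t -> lam (last a t) = lam a + (size t)%:R.
Proof. by move=> hp; rewrite /lam (rank_path hr hp) intrD -pmulrn. Qed.

Lemma down n : forall p, (#|[set w | (w < p)%O]| < n)%N ->
  (p \in Pstar :|: O -> lam p <= x p) /\
  (p \in C -> exists a s, [/\ a \in Pstar :|: O, all (fun q => q \in C) s,
     path cov a (rcons s p) & lam a <= x a]).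
Proof.
elim: n => [//|n IH] p hn.
case: (boolP (p \in Pstar)) => hpP.
  split; first by rewrite ext_marked.
  by move=> pC; move: (C_notP _ pC); rewrite hpP.
have : ~~ minimalb p.
  by apply/negP => hm; move: (hmm p); rewrite hm /= => /(_ isT); rewrite (negbTE hpP).
move/forallPn => [z]; rewrite negbK => zp.
have [_ [v hv]] := cover_exists zp.
have hvn : (#|[set w | (w < v)%O]| < n)%N.
  rewrite -ltnS; apply: leq_trans hn; rewrite ltnS; apply: proper_card; apply/properP; split.
    by apply/fintype.subsetP => w; rewrite !inE => /lt_trans; apply; exact: covers_lt hv.
  by exists v; rewrite !inE ?ltxx ?(covers_lt hv).
have [IH1 IH2] := IH v hvn.
split.
  move=> hpO; case: (PO_or_C v) => hvc.
    have hp1 : path cov v (rcons [::] p) by rewrite /= hv.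
    have := chain_ge hvc hpO (isT : all _ [::]) hp1.
    have := lam_path hp1; rewrite sum_nil /= => ->.
    have := IH1 hvc; lra.
  have [a [s [ha hs hpa hla]]] := IH2 hvc.
  have hp' : path cov a (rcons (rcons s v) p) by rewrite rcons_path hpa last_rcons hv.
  have hs' : all (fun q => q \in C) (rcons s v) by rewrite all_rcons hvc hs.
  have := chain_ge ha hpO hs' hp'.
  have := sum_ge hs'.
  have := lam_path hp'; rewrite last_rcons size_rcons => ->.
  rewrite ?size_rcons ?mulrSr; lra.
move=> pC; case: (PO_or_C v) => hvc.
  by exists v, [::]; split => //; [rewrite /= hv | exact: IH1].
have [a [s [ha hs hpa hla]]] := IH2 hvc.
exists a, (rcons s v); split => //.
  by rewrite all_rcons hvc hs.
by rewrite rcons_path hpa last_rcons hv.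
Qed.

Lemma up n : forall p, (#|[set w | (p < w)%O]| < n)%N ->
  (p \in Pstar :|: O -> x p <= lam p) /\
  (p \in C -> exists b s, [/\ b \in Pstar :|: O, all (fun q => q \in C) s,
     path cov p (rcons s b) & x b <= lam b]).
Proof.
elim: n => [//|n IH] p hn.
case: (boolP (p \in Pstar)) => hpP.
  split; first by rewrite ext_marked.
  by move=> pC; move: (C_notP _ pC); rewrite hpP.
have : ~~ maximalb p.
  by apply/negP => hm; move: (hmm p); rewrite hm orbT => /(_ isT); rewrite (negbTE hpP).
move/forallPn => [z]; rewrite negbK => zp.
have [[w hw] _] := cover_exists zp.
have hwn : (#|[set q | (w < q)%O]| < n)%N.
  rewrite -ltnS; apply: leq_trans hn; rewrite ltnS; apply: proper_card; apply/properP; split.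
    by apply/fintype.subsetP => q; rewrite !inE; apply: lt_trans; exact: covers_lt hw.
  by exists w; rewrite !inE ?ltxx ?(covers_lt hw).
have [IH1 IH2] := IH w hwn.
split.
  move=> hpO; case: (PO_or_C w) => hwc.
    have hp1 : path cov p (rcons [::] w) by rewrite /= hw.
    have := chain_ge hpO hwc (isT : all _ [::]) hp1.
    move: (lam_path hp1) (IH1 hwc); rewrite sum_nil /= ?mulr1n; lra.
  have [b [s [hb hs hpb hlb]]] := IH2 hwc.
  have hp' : path cov p (rcons (w :: s) b) by rewrite /= hw.
  have hs' : all (fun q => q \in C) (w :: s) by rewrite /= hwc.
  have := chain_ge hpO hb hs' hp'.
  have := sum_ge hs'.
  move: (lam_path hp'); rewrite last_rcons ?size_rcons /= ?mulrSr; lra.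
move=> pC; case: (PO_or_C w) => hwc.
  by exists w, [::]; split => //; [rewrite /= hw | exact: IH1].
have [b [s [hb hs hpb hlb]]] := IH2 hwc.
exists b, (w :: s); split => //.
  by rewrite /= hwc.
by rewrite /= hw.
Qed.

Lemma bnd (F : P -> {set P}) p : (#|F p| < #|P|.+1)%N.
Proof. by rewrite ltnS max_card. Qed.

Lemma xPO {a} : a \in Pstar :|: O -> x a = lam a.
Proof.
move=> ha; apply: le_anti.
by rewrite (proj1 (up _ _ (bnd (fun p => [set w | (p < w)%O]) a)) ha)
  (proj1 (down _ _ (bnd (fun p => [set w | (w < p)%O]) a)) ha).
Qed.

Lemma xC p : p \in C -> x p = 1.
Proof.
move=> pC.
have [a [s [ha hs hpa _]]] := proj2 (down _ _ (bnd (fun p => [set w | (w < p)%O]) p)) pC.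
have [b [s2 [hb hs2 hpb _]]] := proj2 (up _ _ (bnd (fun p => [set w | (p < w)%O]) p)) pC.
have hp : path cov a (rcons (s ++ p :: s2) b).
  rewrite rcons_cat cat_path /=; move: hpa hpb.
  by rewrite !rcons_path => /andP[-> ->] /andP[-> ->].
have hs' : all (fun q => q \in C) (s ++ p :: s2) by rewrite all_cat /= hs pC hs2.
have := chain_ge ha hb hs' hp; rewrite big_cat big_cons.
move: (sum_ge hs) (sum_ge hs2) (C_ge1 _ pC) (lam_path hp).
rewrite last_rcons size_rcons size_cat /= (xPO ha) (xPO hb) !mulrSr natrD; lra.
Qed.

Lemma y_eq u : y u = if val u \in C then 1 else lam (val u).
Proof.
rewrite -ext_val; case: ifP => h; first exact: xC.
apply: xPO; rewrite finset.in_setU; case: (trich (val u)) => h'.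
- by move: (valP u); rewrite h'.
- by rewrite h' in h.
- by rewrite h' orbT.
Qed.

End Interior.

Definition z0 : {ptws U -> R} := fun u => if val u \in C then 1 else lam (val u).

Lemma ext_z0 p : ext z0 p = if p \in C then 1 else lam p.
Proof.
case: (boolP (p \in Pstar)) => hp.
  rewrite ext_marked //; case: ifP => // pC.
  by move: (C_notP _ pC); rewrite hp.
by rewrite (ext_unmarked z0 p hp) /z0 SubK.
Qed.

Lemma sum_le_const (f : P -> R) c s : (forall p, p \in s -> f p <= c) ->
  \sum_(p <- s) f p <= (size s)%:R * c.
Proof.
elim: s => [|h s IH] hf; first by rewrite big_nil mul0r.
rewrite big_cons /= -addn1 natrD mulrDl mul1r.
have := hf h (mem_head _ _); have := IH (fun p hp => hf p (mem_behead (s:=h :: s) hp)); lra.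
Qed.

Lemma z0_interior : nbhs z0 (proj_unmarked Pstar S).
Proof.
set N : R := #|P|%:R.
set dl : R := (N + 2)^-1.
have N0 : 0 <= N by rewrite /N ler0n.
have dpos : 0 < dl by rewrite /dl invr_gt0; lra.
have hd : dl * (N + 2) = 1 by rewrite /dl mulVf //; lra.
have : \forall g \near z0, forall u, `|z0 u - (g : {ptws U -> R}) u| < dl.
  apply: (@filter_forall _ U (fun u (g : {ptws U -> R}) => `|z0 u - g u| < dl) (nbhs z0)) => u.
  apply: (@cvgr_dist_lt _ _ _ _ _ (fun g : {ptws U -> R} => g u)) => //.
  exact: (@proj_continuous U (fun _ => R) u z0).
apply: filterS => g hg; apply: ext_proj.
have hb : forall p, `|ext g p - ext z0 p| <= dl.
  move=> p; case: (boolP (p \in Pstar)) => hp.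
    by rewrite !ext_marked // subrr normr0 ltW.
  by rewrite (ext_unmarked g p hp) (ext_unmarked z0 p hp) distrC ltW.
have hb' : forall p, ext z0 p - dl <= ext g p <= ext z0 p + dl.
  move=> p; have := hb p; rewrite ler_norml => /andP[h1 h2].
  by apply/andP; split; lra.
split.
- by move=> a ha; rewrite ext_marked.
- move=> p pC; have /andP[h1 _] := hb' p; move: h1; rewrite ext_z0 pC.
  have : 2 * dl <= 1 by nra.
  lra.
- move=> a b s ha hb0 hs hp.
  have nC q : q \in Pstar :|: O -> q \notin C.
    rewrite finset.in_setU => /orP[hq|hq]; apply/negP => qC.
      by move: (C_notP _ qC); rewrite hq.
    by move: (C_notO _ qC); rewrite hq.
  have /andP[hbb _] := hb' b; have /andP[_ haa] := hb' a.
  move: hbb haa; rewrite !ext_z0 (negbTE (nC _ ha)) (negbTE (nC _ hb0)) => hbb haa.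
  have hsum : \sum_(p <- s) ext g p <= (size s)%:R * (1 + dl).
    apply: sum_le_const => q hq.
    have qC : q \in C by move/allP: hs; apply.
    by have /andP[_] := hb' q; rewrite ext_z0 qC addrC.
  have := lam_path hp; rewrite last_rcons size_rcons mulrSr => hl.
  have hsz : ((size s)%:R : R) <= N.
    rewrite /N ler_nat; have := path_uniq hp; rewrite /= rcons_uniq => /andP[_ /andP[_ hu]].
    by rewrite -(card_uniqP hu) max_card.
  have h1 : (size s)%:R * dl <= N * dl by rewrite ler_wpM2r // ltW.
  have h2 : N * dl + 2 * dl = 1 by rewrite -mulrDl mulrC.
  move: hsum; rewrite mulrDr mulr1; lra.
Qed.

End Main.

Local Open Scope classical_set_scope.

Theorem corollary3p2 (R : realType) (d : Order.disp_t) (P : finPOrderType d)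
    (r : P -> int) (Pstar C O : {set P}) :
  is_rank_function r ->
  (forall p : P, minimalb p || maximalb p -> p \in Pstar) ->
  C :&: O = finset.set0 -> C :|: O = ~: Pstar ->
  exists! y : {ptws unmarked Pstar -> R},
    interior (proj_unmarked Pstar
      (marked_chain_order_polytope Pstar C O (fun a => (r a)%:~R : R))) y /\
    (forall u : unmarked Pstar, y u \is a Num.int).
Proof.
move=> hr hmm hCO hCOP.
exists (z0 R d P r Pstar C); split.
  split; first exact: (@z0_interior R d P r Pstar C O hr hCO hCOP).
  by move=> u; rewrite /z0; case: ifP => _; [exact: rpred1 | exact: intr_int].
move=> y [hy hint]; apply: funext => u.
by rewrite (@y_eq R d P r Pstar C O hr hmm hCOP y hy hint).
Qed.
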